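(* For every rectangular permutation $\pi$ in the domain of the respective operator, $\psi_1(\pi)$, $\psi_2(\pi)$ and $\psi_u(\pi)$ have the same number of recoils as $\pi$, and $\psi_d(\pi)$ has exactly one more recoil than $\pi$.
   Context: A recoil of $\pi\in S_n$ is a value $i\in\{1,\dots,n-1\}$ with $\pi^{-1}_i>\pi^{-1}_{i+1}$ ($i+1$ occurs before $i$). A permutation is rectangular if it avoids $2413,2431,4213,4231$. For $\pi\in S_n$ (one-line form) and $1\le i,j\le n+1$, $\rho_{i,j}(\pi)\in S_{n+1}$ is obtained by increasing by $1$ every entry $\ge i$ and inserting the value $i$ at position $j$. Operators: $\psi_1=\rho_{1,1}$, domain all rectangular permutations (including the empty one); $\psi_2=\rho_{1,2}$, domain rectangular $\pi$ of size $\ge1$ with $\pi_1\ne1$; $\psi_u(\pi)=\rho_{\pi_1,1}(\pi)$, same domain as $\psi_2$; $\psi_d(\pi)=\rho_{\pi_1+1,1}(\pi)$, domain rectangular $\pi$ of size $\ge1$. *)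

(* Defs.v *)
From mathcomp Require Import all_boot.
Set Implicit Arguments. Unset Strict Implicit. Unset Printing Implicit Defensive.

Definition is_perm (s : seq nat) : bool := perm_eq s (iota 1 (size s)).

Definition contains (s p : seq nat) : Prop :=
  exists t : seq nat, [/\ subseq t s, size t = size p &
    forall a b, a < size t -> b < size t -> (nth 0 t a < nth 0 t b) = (nth 0 p a < nth 0 p b)].

Definition avoids (s p : seq nat) : Prop := ~ contains s p.

Definition rectangular (s : seq nat) : Prop :=
  [/\ is_perm s, avoids s [:: 2; 4; 1; 3], avoids s [:: 2; 4; 3; 1],
      avoids s [:: 4; 2; 1; 3] & avoids s [:: 4; 2; 3; 1]].

Definition is_recoil (s : seq nat) (i : nat) : bool := index i.+1 s < index i s.

Definition recoils (s : seq nat) : seq nat :=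
  [seq i <- iota 1 (size s).-1 | is_recoil s i].

Definition nrecoils (s : seq nat) : nat := size (recoils s).

(* rho_{i,j}: increase every entry >= i by 1, then insert value i at (1-based) position j *)
Definition rho (i j : nat) (s : seq nat) : seq nat :=
  let s' := [seq (if i <= x then x.+1 else x) | x <- s] in
  take j.-1 s' ++ i :: drop j.-1 s'.

Definition psi1 (s : seq nat) : seq nat := rho 1 1 s.
Definition psi2 (s : seq nat) : seq nat := rho 1 2 s.
Definition psiu (s : seq nat) : seq nat := rho (head 0 s) 1 s.
Definition psid (s : seq nat) : seq nat := rho (head 0 s).+1 1 s.

(* Main.v *)
Require Import Defs.
From mathcomp Require Import all_boot.
From mathcomp Require Import zify.

Lemma nrecE s : nrecoils s = count (is_recoil s) (iota 1 (size s).-1).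
Proof. by rewrite /nrecoils /recoils size_filter. Qed.

Lemma idx_h (h : nat -> nat) a s v w : injective h -> h v = w -> w != a ->
  index w (a :: map h s) = (index v s).+1.
Proof. by move=> inj <- ne; rewrite /= eq_sym (negbTE ne) index_map. Qed.

Lemma rec0 x v : index v x = 0 -> is_recoil x v = false.
Proof. by rewrite /is_recoil => ->. Qed.

Lemma recS x v : is_recoil x v = (index v.+1 x < index v x). Proof. by []. Qed.

Definition hk k x := if k <= x then x.+1 else x.

Lemma hk_inj k : injective (hk k).
Proof. move=> x y; rewrite /hk; case: (leqP k x); case: (leqP k y); lia. Qed.

Lemma hk_ge k x : k <= x -> hk k x = x.+1.
Proof. by rewrite /hk => ->. Qed.
Lemma hk_lt k x : x < k -> hk k x = x.
Proof. by move=> H; rewrite /hk leqNgt H. Qed.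

Ltac sg := first [ by rewrite hk_ge; lia | by rewrite hk_lt; lia | lia ].

Lemma map_hk k s : [seq (if k <= x then x.+1 else x) | x <- s] = map (hk k) s.
Proof. by []. Qed.

Lemma iota_mem_lt m n v : v \in iota m n -> m <= v < m + n.
Proof. by rewrite mem_iota. Qed.

Lemma rhoE k s : rho k 1 s = k :: map (hk k) s.
Proof. by rewrite /rho /= take0 drop0. Qed.

Lemma part1 : forall s : seq nat, nrecoils (psi1 s) = nrecoils s.
Proof.
case=> [|x r]; first by [].
rewrite /psi1 rhoE !nrecE /= size_map /=.

rewrite add0n -[2]/(1+1).
rewrite iotaDl count_map.
apply: eq_in_count => u /iota_mem_lt Hu /=.
rewrite /is_recoil.
rewrite (@idx_h (hk 1) 1 (x :: r) u.+1 (1 + u).+1) //; try exact: hk_inj; try by sg.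
rewrite (@idx_h (hk 1) 1 (x :: r) u (1 + u)) //; try exact: hk_inj; try by sg.

Qed.

Lemma rho2E x r : rho 1 2 (x :: r) = hk 1 x :: 1 :: map (hk 1) r.
Proof. by rewrite /rho /= take0 drop0. Qed.

Lemma idx2 x r u : 1 <= u ->
  index u.+1 (hk 1 x :: 1 :: map (hk 1) r) = if x == u then 0 else (index u r).+2.
Proof.
move=> Hu; rewrite -(@hk_ge 1 u Hu) /= index_map ?(inj_eq (hk_inj 1)); last exact: hk_inj.
by rewrite hk_ge //; case: u Hu.
Qed.

Lemma part2 : forall s : seq nat, 1 <= size s -> head 0 s != 1 ->
     nrecoils (psi2 s) = nrecoils s.
Proof.
case=> [|x r] //= _ Hx.
rewrite /psi2 rho2E !nrecE /= size_map.

rewrite {1}/is_recoil idx2 // (negbTE Hx).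
have -> : index 1 [:: hk 1 x, 1 & [seq hk 1 i | i <- r]] = 1.
  rewrite /= /hk; case: x Hx => //= [[|x]] //.
rewrite /= add0n -[2]/(1+1).
rewrite iotaDl count_map.
apply: eq_in_count => u /iota_mem_lt Hu /=.
rewrite /is_recoil idx2 ?idx2 /=; try lia.
rewrite add1n; case: (x == u.+1); case: (x == u) => //=.
Qed.

Lemma perm_head x r : is_perm (x::r) -> 1 <= x <= (size r).+1.
Proof. rewrite /is_perm => /perm_mem H. have := mem_head x r. rewrite H mem_iota /=. lia. Qed.

Lemma splits x n : 1 <= x <= n.+1 ->
  iota 1 n.+1 = iota 1 x.-1 ++ (x :: iota x.+1 (n.+1 - x)) /\
  iota 1 n = iota 1 x.-1 ++ iota x (n.+1 - x).
Proof.
move=> Hx; have h1 : 1 + x.-1 = x by lia.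
split.
  have -> : x :: iota x.+1 (n.+1 - x) = iota (1 + x.-1) (n.+1 - x).+1 by rewrite h1.
  rewrite -iotaD; congr iota; lia.
have := iotaD 1 x.-1 (n.+1 - x); rewrite h1 => <-; congr iota; lia.
Qed.

Lemma partu : forall s : seq nat, is_perm s -> 1 <= size s ->
     nrecoils (psiu s) = nrecoils s.
Proof.
case=> [|x r] //= Hp _.
have Hx := @perm_head x r Hp.
rewrite /psiu rhoE !nrecE.
have -> : (size (x :: map (hk x) (x :: r))).-1 = (size r).+1 by rewrite /= size_map.
have -> : (size (x::r)).-1 = size r by [].
have [E1 E2] := @splits x (size r) Hx.
rewrite E1 E2 !count_cat /=.
have -> : is_recoil [:: x, hk x x & [seq hk x i | i <- r]] x = false.
  by apply: rec0; rewrite /= eqxx.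
rewrite add0n; congr addn.
  apply: eq_in_count => v /iota_mem_lt Hv.
  case: (eqVneq v.+1 x) => [Ev|Nv].
    have Nv : (v.+1 == v) = false by lia.
    by rewrite /is_recoil -Ev /= !eqxx Nv.
  rewrite /is_recoil.
  rewrite (@idx_h (hk x) x (x :: r) v.+1 v.+1) //; try exact: hk_inj; try by sg.
  rewrite (@idx_h (hk x) x (x :: r) v v) //; try exact: hk_inj; try by sg.
rewrite -[x.+1]/(1+x) iotaDl count_map.
apply: eq_in_count => u /iota_mem_lt Hu /=.
rewrite /is_recoil.
rewrite (@idx_h (hk x) x (x :: r) u.+1 (1 + u).+1) //; try exact: hk_inj; try by sg.
rewrite (@idx_h (hk x) x (x :: r) u (1 + u)) //; try exact: hk_inj; try by sg.
Qed.

Lemma partd : forall s : seq nat, is_perm s -> 1 <= size s ->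
     nrecoils (psid s) = (nrecoils s).+1.
Proof.
case=> [|x r] //= Hp _.
have Hx := @perm_head x r Hp.
rewrite /psid rhoE !nrecE.
have -> : (size (x.+1 :: map (hk x.+1) (x :: r))).-1 = (size r).+1 by rewrite /= size_map.
have -> : (size (x::r)).-1 = size r by [].
have [E1 E2] := @splits x (size r) Hx.
rewrite E1 E2 !count_cat /=.
have -> : is_recoil [:: x.+1, hk x.+1 x & [seq hk x.+1 i | i <- r]] x = true.
  rewrite /is_recoil /= eqxx hk_lt // eqxx.
  by case: eqP => //; lia.
rewrite add1n addnS; congr (_ + _).+1.
  apply: eq_in_count => v /iota_mem_lt Hv.
  rewrite /is_recoil.
  rewrite (@idx_h (hk x.+1) x.+1 (x :: r) v.+1 v.+1) //; try exact: hk_inj; try by sg.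
  rewrite (@idx_h (hk x.+1) x.+1 (x :: r) v v) //; try exact: hk_inj; try by sg.
rewrite -[x.+1]/(1+x) iotaDl count_map.
apply: eq_in_count => u /iota_mem_lt Hu /=.
case: (eqVneq u x) => [Eu|Nu].
  rewrite !rec0 // Eu /= eqxx //.
rewrite /is_recoil.
rewrite (@idx_h (hk x.+1) x.+1 (x :: r) u.+1 (1 + u).+1) //; try exact: hk_inj; try by sg.
rewrite (@idx_h (hk x.+1) x.+1 (x :: r) u (1 + u)) //; try exact: hk_inj; try by sg.
Qed.

Theorem lemma4p4 :
  (forall s : seq nat, rectangular s -> nrecoils (psi1 s) = nrecoils s) /\
  (forall s : seq nat, rectangular s -> 1 <= size s -> head 0 s != 1 ->
     nrecoils (psi2 s) = nrecoils s) /\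
  (forall s : seq nat, rectangular s -> 1 <= size s -> head 0 s != 1 ->
     nrecoils (psiu s) = nrecoils s) /\
  (forall s : seq nat, rectangular s -> 1 <= size s ->
     nrecoils (psid s) = (nrecoils s).+1).
Proof.
split; first by move=> s _; exact: part1.
split; first by move=> s _; exact: part2.
split; first by move=> s [Hp _ _ _ _] H1 _; exact: partu.
by move=> s [Hp _ _ _ _] H1; exact: partd.
Qed.
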